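(* Assume (C), $c>a$ and $d<b$. (a) If $c+d\ge 0$, then the set $\mathcal E=\{(x,y,z)\in S^2:\ z\ge \frac{a+dx}{c}\}$ is invariant under $V$, i.e. $V(\mathcal E)\subseteq \mathcal E$. (b) If $c+d<0$, then the set $F=\{(x,y,z)\in S^2:\ z< \frac{a+dx}{c}\}$ is invariant under $V$, i.e. $V(F)\subseteq F$.
   Context: Let $S^2=\{(x,y,z)\in\mathbb{R}^3:\ x,y,z\ge 0,\ x+y+z=1\}$. Fix real parameters $a,b,c,d$ satisfying condition (C): $0\le a\le 1$, $0\le b\le 1$, $-(1-a)\le c\le 1+a$, $-(1-b)\le d\le 1-a$. Let $V(x,y,z)=\big(x(1-b+dy),\ y(1-a-dx+cz),\ z(1-cy)+ay+bx\big)$; under (C) it maps $S^2$ into itself. *)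

(* Defs.v *)
From Stdlib Require Import Reals.
Open Scope R_scope.

Definition inS2 (p : R * R * R) : Prop :=
  let '(x, y, z) := p in 0 <= x /\ 0 <= y /\ 0 <= z /\ x + y + z = 1.

Definition condC (a b c d : R) : Prop :=
  0 <= a <= 1 /\ 0 <= b <= 1 /\ -(1 - a) <= c <= 1 + a /\ -(1 - b) <= d <= 1 - a.

Definition V (a b c d : R) (p : R * R * R) : R * R * R :=
  let '(x, y, z) := p in
  (x * (1 - b + d * y), y * (1 - a - d * x + c * z), z * (1 - c * y) + a * y + b * x).

Definition setE (a c d : R) (p : R * R * R) : Prop :=
  inS2 p /\ (let '(x, y, z) := p in z >= (a + d * x) / c).

Definition setF (a c d : R) (p : R * R * R) : Prop :=
  inS2 p /\ (let '(x, y, z) := p in z < (a + d * x) / c).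

(* Main.v *)
Require Import Defs.
From Stdlib Require Import Reals Lra Psatz.
Open Scope R_scope.

Lemma divle (u c z : R) : c > 0 -> (z >= u / c <-> c * z - u >= 0).
Proof.
  intros Hc. assert (E : z - u / c = (c * z - u) / c) by (field; lra).
  split; intro H.
  - assert (H1 : (c*z - u)/c >= 0) by lra.
    assert (H2 : c * z - u = c * ((c*z-u)/c)) by (field; lra).
    rewrite H2. apply Rle_ge, Rmult_le_pos; lra.
  - assert (0 <= (c*z-u)/c). { unfold Rdiv. apply Rmult_le_pos; [lra|].
      apply Rlt_le, Rinv_0_lt_compat; lra. } lra.
Qed.

Lemma divlt (u c z : R) : c > 0 -> (z < u / c <-> c * z - u < 0).
Proof.
  intros Hc. pose proof (divle u c z Hc). destruct H. split; intro H1.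
  - destruct (Rlt_or_le (c*z-u) 0); [auto|]. exfalso. assert (z >= u/c) by (apply H0; lra). lra.
  - destruct (Rlt_or_le z (u/c)); [auto|]. exfalso. assert (c*z-u>=0) by (apply H; lra). lra.
Qed.

Lemma inS2_V a b c d x y z : condC a b c d -> inS2 (x,y,z) -> inS2 (V a b c d (x,y,z)).
Proof.
  unfold condC, inS2, V. intros [[Ha1 Ha2] [[Hb1 Hb2] [[Hc1 Hc2] [Hd1 Hd2]]]] [Hx [Hy [Hz Hs]]].
  assert (Hx' : 0 <= 1 - b + d*y) by nra.
  assert (Hy' : 0 <= 1 - a - d*x + c*z) by (assert (d*x <= (1-a)*x) by nra; assert (-(1-a)*z <= c*z) by nra; nra).
  split; [nra|]. split; [nra|]. split; [assert (0 <= y*z) by nra; assert (c*(y*z) <= (1+a)*(y*z)) by nra; assert (y*z <= z) by nra; assert (y*z <= y) by nra; assert (0 <= a*(y - y*z)) by (apply Rmult_le_pos; lra); assert (0 <= b*x) by nra; nra|]. nra.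
Qed.

Lemma key a b c d x y z :
  c * (z * (1 - c * y) + a * y + b * x) - (a + d * (x * (1 - b + d * y)))
  = (c*z - a - d*x) * (1 - c*y) + x*(c+d)*(b - d*y).
Proof. ring. Qed.

Theorem lemma4p2 (a b c d : R) :
  condC a b c d -> c > a -> d < b ->
  (c + d >= 0 -> forall p, setE a c d p -> setE a c d (V a b c d p)) /\
  (c + d < 0 -> forall p, setF a c d p -> setF a c d (V a b c d p)).
Proof.
  intros HC Hca Hdb.
  assert (HC' := HC).
  destruct HC' as [[Ha1 Ha2] [[Hb1 Hb2] [[Hc1 Hc2] [Hd1 Hd2]]]].
  assert (Hc : c > 0) by lra.
  split; intros Hcd [[x y] z] [HS Hg]; split; try (apply inS2_V; auto);
    destruct HS as [Hx [Hy [Hz Hs]]]; simpl in *.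
  - apply divle in Hg; auto. apply divle; auto. rewrite key.
    assert (0 <= 1 - c*y) by nra.
    assert (0 <= b - d*y) by nra.
    assert (0 <= x*(c+d)) by nra.
    nra.
  - apply divlt in Hg; auto. apply divlt; auto. rewrite key.
    assert (0 < 1 - c*y) by nra.
    assert (0 <= b - d*y) by nra.
    assert (x*(c+d) <= 0) by nra.
    nra.
Qed.
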